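(* In the setting described in the context, let $(x^k)$, $(\bar x^k)$, $(\alpha_k)$ be the sequences generated by the Conceptual Algorithm (with either Method 1 or Method 2). Then, for each $k$, $x^k\in T_k$ if and only if $x^k\in\operatorname{zer}(A+B)$.
   Context: Let $\mathcal H$ be a real Hilbert space with inner product $\langle\cdot,\cdot\rangle$ and norm $\|\cdot\|$. Let $A_1:\mathcal H\to\mathcal H$ be $\beta$-cocoercive for some $\beta>0$ (i.e. $\langle A_1x-A_1y,x-y\rangle\ge\beta\|A_1x-A_1y\|^2$ for all $x,y$), let $A_2:\mathcal H\to\mathcal H$ be maximally monotone and uniformly continuous, let $B:\mathcal H\rightrightarrows\mathcal H$ be maximally monotone, and set $A:=A_1+A_2$. Assume $\operatorname{zer}(A+B):=\{x:0\in Ax+Bx\}\neq\emptyset$. $J_{\alpha B}:=(I+\alpha B)^{-1}$ for $\alpha>0$, and $P_C$ denotes the orthogonal projection onto a nonempty closed convex set $C$. Fix $\theta,\delta\in(0,1)$, $\bar\delta>0$ with $1-\delta-\bar\delta>0$, and $\alpha_{-1}>0$ with $\alpha_{-1}\le4\beta\bar\delta$. Conceptual Algorithm: pick $x^0\in\mathcal H$. Given $x^k$ and $\alpha_{k-1}$, for $j\in\mathbb N$ let $\bar x^k_j:=J_{\alpha_{k-1}\theta^jB}(x^k-\alpha_{k-1}\theta^jAx^k)$ and let $j(k)$ be the smallest $j\in\mathbb N$ with $\alpha_{k-1}\theta^j\langle A_2x^k-A_2\bar x^k_j,x^k-\bar x^k_j\rangle\le\delta\|x^k-\bar x^k_j\|^2$.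 Set $\alpha_k:=\alpha_{k-1}\theta^{j(k)}$, $\bar x^k:=J_{\alpha_kB}(x^k-\alpha_kAx^k)$, $r_k:=\frac{\bar\delta}{\alpha_k}\|x^k-\bar x^k\|^2$, $T_k:=\{x\in\mathcal H:\langle \frac{x^k-\bar x^k}{\alpha_k}-(A_2x^k-A_2\bar x^k),x-\bar x^k\rangle\le r_k\}$ and $\Gamma_k:=\{x\in\mathcal H:\langle x^0-x^k,x-x^k\rangle\le0\}$. Method 1 sets $x^{k+1}:=P_{T_k}(x^k)$; Method 2 sets $x^{k+1}:=P_{T_k\cap\Gamma_k}(x^0)$. The algorithm stops if $x^{k+1}=x^k$. *)

(* Defs.v *)
From HB Require Import structures.
From mathcomp Require Import all_boot all_order all_algebra.
From mathcomp Require Import all_classical all_reals all_analysis.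
Set Implicit Arguments. Unset Strict Implicit. Unset Printing Implicit Defensive.
Import Order.TTheory GRing.Theory Num.Theory.
Import numFieldNormedType.Exports.
Local Open Scope classical_set_scope.
Local Open Scope ring_scope.

Definition is_inner_product (R : realType) (H : completeNormedModType R)
  (ip : H -> H -> R) : Prop :=
  [/\ forall x y, ip x y = ip y x,
      forall x y z, ip (x + y) z = ip x z + ip y z,
      forall (a : R) x y, ip (a *: x) y = a * ip x y
    & forall x, ip x x = `|x| ^+ 2].

Section Ops.
Context (R : realType) (H : completeNormedModType R) (ip : H -> H -> R).

Definition cocoercive (beta : R) (A : H -> H) : Prop :=
  forall x y, beta * `|A x - A y| ^+ 2 <= ip (A x - A y) (x - y).

Definition monotone_op (B : H -> set H) : Prop :=
  forall x y u v, B x u -> B y v -> 0 <= ip (u - v) (x - y).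

Definition maximal_monotone (B : H -> set H) : Prop :=
  monotone_op B /\
  forall B' : H -> set H, monotone_op B' ->
    (forall x u, B x u -> B' x u) -> (forall x u, B' x u -> B x u).

Definition sv (A : H -> H) : H -> set H := fun x => [set A x].

Definition zer_sum (A : H -> H) (B : H -> set H) : set H :=
  [set x | B x (- A x)].

(** the resolvent J_{a B} = (I + a B)^{-1}: J z is the (unique, by
    maximal monotonicity) point p with z \in p + a B p. *)
Definition resolvent (a : R) (B : H -> set H) (z : H) : H :=
  xget 0 [set p | exists2 b, B p b & z = p + a *: b].

Definition projC (C : set H) (x : H) : H :=
  xget 0 [set p | C p /\ forall c, C c -> `|x - p| <= `|x - c|].

End Ops.

(* Main.v *)
Require Import Defs.
From HB Require Import structures.
From mathcomp Require Import all_boot all_order all_algebra.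
From mathcomp Require Import all_classical all_reals all_analysis.
From mathcomp Require Import ring lra.
Import Order.TTheory GRing.Theory Num.Theory.
Import numFieldNormedType.Exports.
Local Open Scope classical_set_scope.
Local Open Scope ring_scope.
Set Implicit Arguments. Unset Strict Implicit.

Section IP.
Context (R : realType) (H : completeNormedModType R) (ip : H -> H -> R).
Hypothesis Hip : is_inner_product ip.

Lemma ipC x y : ip x y = ip y x. Proof. by case: Hip. Qed.
Lemma ipDl x y z : ip (x + y) z = ip x z + ip y z. Proof. by case: Hip. Qed.
Lemma ipZl a x y : ip (a *: x) y = a * ip x y. Proof. by case: Hip. Qed.
Lemma ipxx x : ip x x = `|x| ^+ 2. Proof. by case: Hip. Qed.
Lemma ipDr x y z : ip z (x + y) = ip z x + ip z y.
Proof. by rewrite ipC ipDl !(ipC z). Qed.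
Lemma ipZr a x y : ip y (a *: x) = a * ip y x.
Proof. by rewrite ipC ipZl ipC. Qed.
Lemma ipNl x y : ip (- x) y = - ip x y.
Proof. by rewrite -scaleN1r ipZl mulN1r. Qed.
Lemma ipNr x y : ip y (- x) = - ip y x.
Proof. by rewrite -scaleN1r ipZr mulN1r. Qed.
Lemma ip0l y : ip 0 y = 0.
Proof. by rewrite -(scale0r (0:H)) ipZl mul0r. Qed.
Lemma ip0r y : ip y 0 = 0.
Proof. by rewrite ipC ip0l. Qed.
Lemma ipBl x y z : ip (x - y) z = ip x z - ip y z.
Proof. by rewrite ipDl ipNl. Qed.
Lemma ipBr x y z : ip z (x - y) = ip z x - ip z y.
Proof. by rewrite ipDr ipNr. Qed.
Lemma ipxx_ge0 x : 0 <= ip x x.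
Proof. by rewrite ipxx sqr_ge0. Qed.
Lemma ipxx_eq0 x : ip x x = 0 -> x = 0.
Proof. by rewrite ipxx => /eqP; rewrite sqrf_eq0 normr_eq0 => /eqP. Qed.

Definition ipE := (ipDl, ipDr, ipZl, ipZr, ipNl, ipNr, ip0l, ip0r).

End IP.

Section Hull.
Context (R : realType) (H : completeNormedModType R) (ip : H -> H -> R).
Hypothesis Hip : is_inner_product ip.
Context (G : H -> H -> Prop).
Hypothesis Gmono : forall y u y' u', G y u -> G y' u' -> 0 <= ip (u - u') (y - y').

Inductive hull : H -> H -> R -> Prop :=
| hbase y u : G y u -> hull y u (ip u y)
| hcomb Y1 U1 P1 Y2 U2 P2 t : hull Y1 U1 P1 -> hull Y2 U2 P2 -> 0 <= t -> t <= 1 ->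
   hull ((1-t) *: Y1 + t *: Y2) ((1-t) *: U1 + t *: U2) ((1-t) * P1 + t * P2).

Lemma phi_base y u Y U P : G y u -> hull Y U P -> 0 <= ip u y + P - ip u Y - ip U y.
Proof.
move=> Gyu; elim => {Y U P} [y' u' G' | Y1 U1 P1 Y2 U2 P2 t _ IH1 _ IH2 t0 t1].
  by have := Gmono Gyu G'; rewrite !(ipBl Hip) !(ipBr Hip); lra.
rewrite !(ipDl Hip) !(ipDr Hip) !(ipZl Hip) !(ipZr Hip).
have s0 : 0 <= 1 - t by lra.
have := mulr_ge0 s0 IH1; have := mulr_ge0 t0 IH2; nra.
Qed.

Lemma phi_hull Y1 U1 P1 Y2 U2 P2 : hull Y1 U1 P1 -> hull Y2 U2 P2 ->
  0 <= P1 + P2 - ip U1 Y2 - ip U2 Y1.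
Proof.
move=> h1 h2; elim: h1 => {Y1 U1 P1} [y u Gyu | Y1 U1 P1 Y3 U3 P3 t _ IH1 _ IH2 t0 t1].
  exact: phi_base.
rewrite !(ipDl Hip) !(ipDr Hip) !(ipZl Hip) !(ipZr Hip).
have s0 : 0 <= 1 - t by lra.
have := mulr_ge0 s0 IH1; have := mulr_ge0 t0 IH2; nra.
Qed.

Lemma excess Y U P : hull Y U P -> ip U Y <= P.
Proof. by move=> h; have := phi_hull h h; lra. Qed.

Definition D Y U P := - ip (Y - U) (Y - U) / 4 - P.

Lemma D_le0 Y U P : hull Y U P -> D Y U P <= 0.
Proof.
move=> h; have := excess h; have := ipxx_ge0 Hip (Y + U); rewrite /D.
rewrite !(ipBl Hip) !(ipBr Hip) !(ipDl Hip) !(ipDr Hip) (ipC Hip Y U); lra.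
Qed.

Lemma vec_comb (Y1 U1 Y2 U2 : H) t :
  (1-t) *: Y1 + t *: Y2 - ((1-t) *: U1 + t *: U2) = (1-t) *: (Y1 - U1) + t *: (Y2 - U2).
Proof. by rewrite !scalerBr opprD addrACA. Qed.

Lemma D_comb Y1 U1 P1 Y2 U2 P2 t :
  D ((1-t) *: Y1 + t *: Y2) ((1-t) *: U1 + t *: U2) ((1-t) * P1 + t * P2) =
  (1-t) * D Y1 U1 P1 + t * D Y2 U2 P2
   + t * (1-t) / 4 * ip ((Y1 - U1) - (Y2 - U2)) ((Y1 - U1) - (Y2 - U2)).
Proof.
rewrite /D vec_comb; move: (Y1 - U1) (Y2 - U2) => q1 q2.
rewrite !(ipBl Hip) !(ipBr Hip) !(ipDl Hip) !(ipDr Hip) !(ipZl Hip) !(ipZr Hip) (ipC Hip q2 q1).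
ring.
Qed.

Lemma small_le0 (x C : R) : 0 <= C -> (forall n : nat, x <= ((n.+1)%:R)^-1 * C) -> x <= 0.
Proof.
move=> C0 h; rewrite leNgt; apply/negP => x0.
have cx0 : 0 <= C / x by rewrite divr_ge0 // ltW.
have hb := archi_boundP cx0.
set N := Num.bound (C / x) in hb.
have := h N.
have n1 : 0 < (N.+1)%:R :> R by rewrite ltr0n.
have i1 : (N.+1)%:R * ((N.+1)%:R)^-1 = 1 :> R by rewrite mulfV // gt_eqF.
have i2 : x * x^-1 = 1 by rewrite mulfV // gt_eqF.
have nn : (N%:R : R) + 1 = (N.+1)%:R by rewrite -natr1.
move=> hx.
have a1 : x * (N.+1)%:R <= C.
  by have := ler_wpM2r (ltW n1) hx; rewrite mulrAC mulVf ?mul1r // gt_eqF.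
have a2 : C < N%:R * x.
  by move: hb; rewrite -(ltr_pM2r x0) -mulrA mulVf ?mulr1 // gt_eqF.
nra.
Qed.
End Hull.
Section M.
Context (R : realType) (H : completeNormedModType R) (ip : H -> H -> R).
Hypothesis Hip : is_inner_product ip.
Context (G : H -> H -> Prop).
Hypothesis Gmono : forall y u y' u', G y u -> G y' u' -> 0 <= ip (u - u') (y - y').
Notation hull := (hull ip G).
Notation D := (D ip).
Lemma minty0 : (exists y u, G y u) ->
  exists p, forall y u, G y u -> ip (p + u) (p - y) <= 0.
Proof.
move=> [y0 [u0 G0]].
pose E := [set r : R | exists Y U P, hull Y U P /\ r = D Y U P].
have E0 : E (D y0 u0 (ip u0 y0)) by exists y0, u0, (ip u0 y0); split => //; exact: hbase.
have ubE : ubound E 0.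
  by move=> r [Y [U [P [h ->]]]]; exact: (D_le0 Hip Gmono h).
have hsE : has_sup E by split; [exists (D y0 u0 (ip u0 y0)) | exists 0].
pose s := sup E.
have s_le0 : s <= 0 by apply: ge_sup => //; exists (D y0 u0 (ip u0 y0)).
have s_ub Y U P : hull Y U P -> D Y U P <= s.
  by move=> h; apply: sup_upper_bound => //; exists Y, U, P.
pose e (n : nat) : R := ((n.+1)%:R)^-1.
have e_gt0 n : 0 < e n by rewrite /e invr_gt0 ltr0n.
have e_le1 n : e n <= 1 by rewrite /e invf_le1 ?ltr0n // ler1n.
have e_mon n m : (n <= m)%N -> e m <= e n.
  by move=> nm; rewrite /e lef_pV2 ?posrE ?ltr0n // ler_nat.
have : forall n, exists h : H * H * R, hull h.1.1 h.1.2 h.2 /\ s - e n ^+ 2 < D h.1.1 h.1.2 h.2.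
  move=> n; have [r [Y [U [P [h ->]]]] lt] := sup_adherent (exprn_gt0 2 (e_gt0 n)) hsE.
  by exists (Y, U, P).
move=> /choice [f Hf].
pose q n := (f n).1.1 - (f n).1.2.
have half0 : (0:R) <= 2^-1 by rewrite invr_ge0.
have half1 : (2:R)^-1 <= 1 by rewrite invf_le1 // ler1n.
have cauchyq n m : (n <= m)%N -> `|q n - q m| <= 4 * e n.
  move=> nm; have [hn ltn] := Hf n; have [hm ltm] := Hf m.
  have := s_ub _ _ _ (hcomb hn hm half0 half1).
  rewrite D_comb // -/(q n) -/(q m) (ipxx Hip).
  have := e_mon _ _ nm; have := e_gt0 m; have := e_gt0 n.
  move: ltn ltm; set a := `|q n - q m|; set en := e n; set em := e m.
  set Dn := D _ _ _; set Dm := D _ _ _.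
  have -> : (2:R)^-1 * (1 - 2^-1) / 4 = 1/16 by field.
  have -> : (1:R) - 2^-1 = 1/2 by field.
  have -> : (2:R)^-1 = 1/2 by field.
  move=> ltn ltm en0 em0 emn hh.
  have nrm0 : 0 <= a by rewrite /a normr_ge0.
  have emn2 : em ^+ 2 <= en ^+ 2 by nra.
  have a2 : a ^+ 2 <= (4 * en) ^+ 2 by nra.
  nra.
have eps_small eps : 0 < eps -> exists N, 4 * e N < eps.
  move=> eps0; have b0 : 0 <= 4 / eps by rewrite divr_ge0 // ltW.
  have hb := archi_boundP b0; set N := Num.bound _ in hb; exists N.
  have n1 : 0 < (N.+1)%:R :> R by rewrite ltr0n.
  have nn : (N%:R : R) + 1 = (N.+1)%:R by rewrite -natr1.
  have a2 : 4 < N%:R * eps.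
    by move: hb; rewrite -(ltr_pM2r eps0) -mulrA mulVf ?mulr1 // gt_eqF.
  rewrite /e -(ltr_pM2r n1) -mulrA mulVf ?mulr1 ?gt_eqF //; nra.
have cq : cvg (q @ \oo).
  apply: cauchy_cvg; apply: cauchy_exP => eps eps0.
  have [N hN] := eps_small _ eps0.
  exists (q N); apply: filterS (nbhs_infty_ge N) => n Nn /=.
  rewrite -ball_normE /ball_ /=.
  exact: le_lt_trans (cauchyq _ _ Nn) hN.
pose qs := lim (q @ \oo).
have bnd n : `|q n - qs| <= 4 * e n.
  have := @closed_cvg _ _ _ _ q (closed_ball_ (@Num.norm _ H) (q n) (4 * e n)) (@closed_closed_ball_ _ _ (q n) (4 * e n)) _ _ cq.
  apply; apply: filterS (nbhs_infty_ge n) => m nm.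
  exact: cauchyq.
exists (2^-1 *: qs) => y u Gyu.
have hb := hbase ip Gyu.
set Db := D y u (ip u y).
set a := `|qs - (y - u)|.
have -> : ip (2^-1 *: qs + u) (2^-1 *: qs - y) = Db + a ^+ 2 / 4.
  rewrite /a -(ipxx Hip) /Db /D.
  rewrite ?(ipBl Hip) ?(ipBr Hip) ?(ipDl Hip) ?(ipDr Hip) ?(ipZl Hip) ?(ipZr Hip) ?(ipNl Hip) ?(ipNr Hip).
  rewrite ?(ipBl Hip) ?(ipBr Hip) ?(ipDl Hip) ?(ipDr Hip) ?(ipZl Hip) ?(ipZr Hip) ?(ipNl Hip) ?(ipNr Hip).
  rewrite (ipC Hip y u) (ipC Hip qs u) (ipC Hip qs y).

  by field.
have a0 : 0 <= a by rewrite normr_ge0.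
have := @small_le0 _ (Db + a ^+ 2 / 4) (1 + 2 * a + a ^+ 2).
apply; first nra.
move=> n; rewrite -/(e n); set t := e n.
have t0 : 0 < t := e_gt0 n.
have t1 : t <= 1 := e_le1 n.
have [hn ltn] := Hf n.
have Dn0 := s_ub _ _ _ hn.
have := s_ub _ _ _ (hcomb hn hb (ltW t0) t1).
rewrite D_comb // -/(q n) (ipxx Hip).
set r := `|q n - (y - u)|; set Dn := D _ _ _ in ltn Dn0 *.
move=> hh.
move: ltn hh; rewrite -/t -/Db => ltn hh.
have tDn : t * Dn <= 0 by rewrite pmulr_rle0 //; apply: le_trans Dn0 s_le0.
have p1 : t * (Db + (1 - t) / 4 * r ^+ 2 - t) <= 0 by nra.
have k1 : Db + (1 - t) / 4 * r ^+ 2 <= t.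
  by move: p1; rewrite pmulr_rle0 // subr_le0.
have r0 : 0 <= r by rewrite normr_ge0.
have dra : `|r - a| <= 4 * t.
  apply: le_trans (bnd n); rewrite /r /a; move: (y - u) => w.
  apply: le_trans (ler_dist_dist _ _) _.
  by rewrite opprB addrA subrK.
have ra : a - 4 * t <= r.
  have := ler_norm (a - r); rewrite distrC; lra.
have k2 : a ^+ 2 - 8 * t * a <= r ^+ 2.
  case: (lerP a (4 * t)) => ha; first nra.
  have : (a - 4 * t) ^+ 2 <= r ^+ 2 by nra.
  nra.
nra.
Qed.
End M.

Section Res.
Context (R : realType) (H : completeNormedModType R) (ip : H -> H -> R).
Hypothesis Hip : is_inner_product ip.

Lemma res_unique (B : H -> set H) (a : R) z p b p' b' : monotone_op ip B -> 0 < a ->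
  B p b -> z = p + a *: b -> B p' b' -> z = p' + a *: b' -> p = p'.
Proof.
move=> Bm a0 Bb zb Bb' zb'.
have eb : b = a^-1 *: (z - p).
  by rewrite zb (addrC p) addrK scalerA mulVf ?scale1r // gt_eqF.
have eb' : b' = a^-1 *: (z - p').
  by rewrite zb' (addrC p') addrK scalerA mulVf ?scale1r // gt_eqF.
have := Bm _ _ _ _ Bb Bb'.
have -> : ip (b - b') (p - p') = - a^-1 * ip (p - p') (p - p').
  rewrite eb eb'.
  rewrite ?(ipBl Hip) ?(ipBr Hip) ?(ipDl Hip) ?(ipDr Hip) ?(ipZl Hip) ?(ipZr Hip) ?(ipNl Hip) ?(ipNr Hip).
  rewrite ?(ipBl Hip) ?(ipBr Hip) ?(ipDl Hip) ?(ipDr Hip) ?(ipZl Hip) ?(ipZr Hip) ?(ipNl Hip) ?(ipNr Hip).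
  rewrite (ipC Hip p p'); ring.
have := ipxx_ge0 Hip (p - p'); have ai : 0 < a^-1 by rewrite invr_gt0.
move=> h1 h2.
have h3 : ip (p - p') (p - p') = 0 by nra.
by apply/eqP; rewrite -subr_eq0; apply/eqP; apply: (ipxx_eq0 Hip).
Qed.

Lemma minty_res (B : H -> set H) (a : R) (z : H) : 0 < a -> maximal_monotone ip B ->
  (exists y w, B y w) -> exists p, exists2 b, B p b & z = p + a *: b.
Proof.
move=> a0 [Bm Bmax] [y0 [w0 B0]].
have an : a != 0 by rewrite gt_eqF.
pose G y u := B y (a^-1 *: (u + z)).
have Gm : forall y u y' u', G y u -> G y' u' -> 0 <= ip (u - u') (y - y').
  move=> y u y' u' g g'; have := Bm _ _ _ _ g g'.
  rewrite -scalerBr (ipZl Hip) pmulr_rge0 ?invr_gt0 //.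
  by rewrite opprD addrACA subrr addr0.
have Gne : exists y u, G y u.
  exists y0, (a *: w0 - z); rewrite /G subrK scalerA mulVf ?scale1r //.
have [p Hp] := minty0 Hip Gm Gne.
have Hp' y w : B y w -> ip (p + (a *: w - z)) (p - y) <= 0.
  by move=> Byw; apply: Hp; rewrite /G subrK scalerA mulVf ?scale1r.
pose vp := a^-1 *: (z - p).
pose B' := fun y => fun v => B y v \/ (y = p /\ v = vp).
have key y w : B y w -> ip (w - vp) (y - p) = - a^-1 * ip (p + (a *: w - z)) (p - y).
  move=> _; rewrite /vp.
  rewrite ?(ipBl Hip) ?(ipBr Hip) ?(ipDl Hip) ?(ipDr Hip) ?(ipZl Hip) ?(ipZr Hip) ?(ipNl Hip) ?(ipNr Hip).
  rewrite ?(ipBl Hip) ?(ipBr Hip) ?(ipDl Hip) ?(ipDr Hip) ?(ipZl Hip) ?(ipZr Hip) ?(ipNl Hip) ?(ipNr Hip).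

  by field.
have ai : 0 < a^-1 by rewrite invr_gt0.
have B'm : monotone_op ip B'.
  move=> x y u v [Bxu|[-> ->]] [Byv|[-> ->]].
  - exact: Bm.
  - rewrite (key _ _ Bxu); have := Hp' _ _ Bxu; nra.
  - rewrite -opprB -(opprB y) (ipNl Hip) (ipNr Hip) opprK.
    rewrite (key _ _ Byv); have := Hp' _ _ Byv; nra.
  - by rewrite subrr (ip0l Hip).
have := Bmax B' B'm (fun x u h => or_introl h) p vp (or_intror (conj erefl erefl)).
move=> Bp; exists p, vp => //.
by rewrite /vp scalerA mulfV ?scale1r // addrC subrK.
Qed.

End Res.

Unset Implicit Arguments. Set Strict Implicit.

Theorem proposition4p5 (R : realType) (H : completeNormedModType R)
  (ip : H -> H -> R) (beta theta delta dbar : R)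
  (A1 A2 : H -> H) (B : H -> set H) (method1 : bool)
  (x xb : nat -> H) (al : nat -> R) (jk : nat -> nat) (K : nat) :
  is_inner_product ip ->
  0 < beta -> cocoercive ip beta A1 ->
  maximal_monotone ip (sv A2) -> unif_continuous A2 ->
  maximal_monotone ip B ->
  (exists z, zer_sum (fun y => A1 y + A2 y) B z) ->
  0 < theta < 1 -> 0 < delta < 1 -> 0 < dbar -> 0 < 1 - delta - dbar ->
  0 < al 0 -> al 0 <= 4 * beta * dbar ->
  let A := fun y => A1 y + A2 y in
  let xbar := fun k j =>
    resolvent (al k * theta ^+ j) B (x k - (al k * theta ^+ j) *: A (x k)) in
  let cond := fun k j =>
    al k * theta ^+ j * ip (A2 (x k) - A2 (xbar k j)) (x k - xbar k j)
      <= delta * `|x k - xbar k j| ^+ 2 in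
  let T := fun k => [set y : H |
    ip ((al k.+1)^-1 *: (x k - xb k) - (A2 (x k) - A2 (xb k))) (y - xb k)
      <= dbar / al k.+1 * `|x k - xb k| ^+ 2] in
  let Gam := fun k => [set y : H | ip (x 0 - x k) (y - x k) <= 0] in
  (forall k, (k <= K)%N ->
     [/\ cond k (jk k), (forall j, (j < jk k)%N -> ~ cond k j),
         al k.+1 = al k * theta ^+ (jk k)
       & xb k = resolvent (al k.+1) B (x k - al k.+1 *: A (x k))]) ->
  (forall k, (k < K)%N ->
     x k.+1 = if method1 then projC (T k) (x k)
              else projC (T k `&` Gam k) (x 0)) ->
  T K (x K) <-> zer_sum A B (x K).
Proof.
move=> Hip beta0 coco A2mm A2uc Bmm [z0 Hz0] th de dbar0 gap al0 al0b.
move=> A xbar cond T Gam Hk Hx.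
have th0 : 0 < theta by case/andP: th.
have alpos : forall k, (k <= K.+1)%N -> 0 < al k.
  elim=> [//|k IH] hk.
  have [_ _ -> _] := Hk k hk.
  by rewrite mulr_gt0 ?exprn_gt0 // IH // ltnW.
have a0 : 0 < al K.+1 := alpos _ (leqnn _).
have [cK _ eaK xbK] := Hk K (leqnn K).
move: cK; rewrite /cond /xbar -eaK -xbK => cK.
have an : al K.+1 != 0 by rewrite gt_eqF.
rewrite /T /= /zer_sum /=.
move: cK xbK; set a := al K.+1; set X := x K; set Xb := xb K => cK xbK.
have Bne : exists y w, B y w by exists z0, (- (A1 z0 + A2 z0)).
split.
- move=> hT.
  have hd : X = Xb.
    move: hT cK; rewrite -!(ipxx Hip) (ipBl Hip) (ipZl Hip).
    set N := ip (X - Xb) (X - Xb); set I := ip (A2 X - A2 Xb) (X - Xb).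
    move=> hT cK.
    have N0 : 0 <= N by apply: ipxx_ge0.
    have ai : a * a^-1 = 1 by rewrite mulfV.
    have ai0 : 0 < a^-1 by rewrite invr_gt0.
    have h1 : N - a * I <= dbar * N.
      have := ler_wpM2l (ltW a0) hT.
      have -> : a * (a^-1 * N - I) = N - a * I by rewrite mulrBr mulrA ai mul1r.
      by have -> : a * (dbar / a * N) = dbar * N by field.
    have h2 : N = 0.
      apply/eqP; rewrite eq_le N0 andbT.
      have : (1 - delta - dbar) * N <= 0 by nra.
      by rewrite pmulr_rle0.
    by apply/eqP; rewrite -subr_eq0; apply/eqP; apply: (ipxx_eq0 Hip).
  have [p [b Bpb ezb]] := minty_res Hip (X - a *: A X) a0 Bmm Bne.
  have hS : (fun p => exists2 b, B p b & X - a *: A X = p + a *: b) p by exists b.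
  have : exists2 b, B Xb b & X - a *: A X = Xb + a *: b.
    by rewrite xbK /resolvent; exact: (@xgetI H 0 [set q | exists2 b, B q b & X - a *: A X = q + a *: b] p hS).
  rewrite -hd => -[b' Bb' eb'].
  move: eb' => /addrI eb'.
  suff -> : - A X = b' by [].
  by apply: (scalerI an); rewrite -eb' scalerN.
- move=> hz.
  have hS : (fun p => exists2 b, B p b & X - a *: A X = p + a *: b) X.
    by exists (- A X) => //; rewrite scalerN.
  have : exists2 b, B Xb b & X - a *: A X = Xb + a *: b.
    by rewrite xbK /resolvent; exact: (@xgetI H 0 [set q | exists2 b, B q b & X - a *: A X = q + a *: b] X hS).
  move=> -[b' Bb' eb'].
  have hd : Xb = X.
    apply: (res_unique Hip (proj1 Bmm) a0 Bb' eb' hz); by rewrite scalerN.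
  by rewrite hd !subrr (ip0r Hip) normr0 expr0n /= mulr0.
Qed.
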